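(* Let $q\in\mathbb{C}^{\ast}$ not a root of unity, $R=\mathbb{C}[[z]]$, $F=\mathbb{C}((z))$. Let $V$ be an object of ${\cal B}^{al}_q$, let $L\subset V$ be a $\xi$-invariant $R$-lattice (not necessarily $\xi^{-1}$-invariant), let $\overline L=L/zL$ with the $\mathbb{C}$-linear operator induced by $\xi$, and let $\overline P\subset\overline L$ be a $\xi$-invariant subspace such that for every eigenvalue $\alpha$ of $\xi$ on $\overline P$ and every integer $n\neq0$, the number $q^n\alpha$ is not an eigenvalue of $\xi$ on $\overline L$. Then the embedding $\overline P\hookrightarrow\overline L$ has a $\mathbb{C}[\xi]$-equivariant lifting $\overline P\to L$, i.e. a $\mathbb{C}$-linear map commuting with $\xi$ whose composition with $L\to L/zL$ is the inclusion.
   Context: ${\cal B}^{al}_q$ is the category of finite-dimensional $F$-vector spaces $V$ equipped with a semi-linear automorphism $\xi$, $\xi(f(z)v)=f(qz)\xi(v)$. An $R$-lattice in $V$ is a finitely generated $R$-submodule spanning $V$ over $F$. Since $\xi(zL)=qz\xi(L)\subset zL$, $\xi$ induces a $\mathbb{C}$-linear operator on $L/zL$. *)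

(* Defs.v *)
From HB Require Import structures.
From mathcomp Require Import all_boot all_order all_algebra.
From mathcomp Require Import complex.
From mathcomp Require Export reals.
Set Implicit Arguments. Unset Strict Implicit. Unset Printing Implicit Defensive.
Import Order.TTheory GRing.Theory Num.Theory.
Local Open Scope ring_scope.

(* Elements of R = C[[z]] are coefficient sequences f : nat -> K,
   f = \sum_k f k z^k. *)

Definition psmul (K : fieldType) (f g : nat -> K) : nat -> K :=
  fun k => \sum_(m < k.+1) f m * g (k - m)%N.

(* The q-twist sigma_q : f(z) |-> f(qz). *)
Definition qtwist (K : fieldType) (q : K) (f : nat -> K) : nat -> K :=
  fun k => q ^+ k * f k.

(* Coordinates: L = R^n with R-basis e_0..e_{n-1}; the semilinear operator
   xi is determined by xi(e_i) = \sum_j A i j e_j, hence for v = \sum_i v_i e_i,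
   xi(v)_j = \sum_i v_i(qz) * A i j. *)
Definition lat_xi (K : fieldType) (n : nat) (q : K)
  (A : 'I_n -> 'I_n -> nat -> K) (v : 'I_n -> nat -> K) : 'I_n -> nat -> K :=
  fun j k => \sum_(i < n) psmul (qtwist q (v i)) (A i j) k.

(* The induced C-linear operator on Lbar = L/zL = K^n (row vectors):
   ubar |-> ubar *m reduce_mx A. *)
Definition reduce_mx (K : fieldType) (n : nat) (A : 'I_n -> 'I_n -> nat -> K)
  : 'M[K]_n := \matrix_(i, j) A i j 0%N.

(* xi is an automorphism of V = F^n (F = K((z))) iff A is invertible over F,
   i.e. A * B = z^N * I for some matrix B over K[[z]] and some N. *)
Definition invertible_over_F (K : fieldType) (n : nat)
  (A : 'I_n -> 'I_n -> nat -> K) : Prop :=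
  exists (B : 'I_n -> 'I_n -> nat -> K) (N : nat),
    forall i j k, \sum_(l < n) psmul (A i l) (B l j) k
                  = ((i == j) && (k == N))%:R.

(* Main.v *)
Require Import Defs.
From HB Require Import structures.
From mathcomp Require Import all_boot all_order all_algebra.
From mathcomp Require Import complex reals.
Import Order.TTheory GRing.Theory Num.Theory.
Local Open Scope ring_scope.

Lemma sylv_inj (F : closedFieldType) r n (B : 'M[F]_r) (M : 'M[F]_n) :
  (forall z, eigenvalue M z -> ~~ eigenvalue B z) ->
  forall X : 'M_(r,n), B *m X = X *m M -> X = 0.
Proof.
case: n M => [|n'] M Hev X HBX; first by rewrite thinmx0.
have [rs Drs] := closed_field_poly_normal (char_poly M).
have lc: lead_coef (char_poly M) = 1 by apply/monicP/char_poly_monic.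
rewrite lc scale1r in Drs.
have rsE z : z \in rs -> eigenvalue M z.
  by rewrite eigenvalue_root_char Drs root_prod_XsubC.
have HP : horner_mx M (\prod_(z <- rs) ('X - z%:P)) = \prod_(z <- rs) (M - z%:M).
  by rewrite rmorph_prod; apply: eq_bigr => z _; rewrite rmorphB /= horner_mx_X horner_mx_C.
have CH := Cayley_Hamilton M; rewrite Drs HP in CH.
have : X *m \prod_(z <- rs) (M - z%:M) = 0 by rewrite CH mulmx0.
elim: rs {Drs HP CH} rsE X HBX => [|z rs IH] rsE X HBX.
  by rewrite big_nil mulmx1.
rewrite big_cons -mulmxE mulmxA.
have -> : X *m (M - z%:M) = (B - z%:M) *m X.
  by rewrite mulmxBr mulmxBl mul_mx_scalar mul_scalar_mx HBX.
move=> H.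
have HY : (B - z%:M) *m X = 0.
  apply: IH H.
    by move=> y yin; apply: rsE; rewrite inE yin orbT.
  rewrite -[(B - z%:M) *m X *m M]mulmxA -HBX !mulmxA mulmxBr mulmxBl.
  by rewrite mulmxBl mul_mx_scalar mul_scalar_mx mulmxBl.
have Hz := Hev z (rsE z (mem_head _ _)).
have Hu : (B - z%:M) \in unitmx.
  by rewrite -row_free_unit -kermx_eq0; move: Hz; rewrite /eigenvalue /eigenspace negbK.
by rewrite -(mulKmx Hu X) HY mulmx0.
Qed.

Lemma sylv_unit (F : fieldType) r n (B : 'M[F]_r) (M : 'M[F]_n) :
  (forall X : 'M_(r,n), B *m X = X *m M -> X = 0) ->
  (lin_mulmx B - lin_mulmxr M : 'M_(r * n)) \in unitmx.
Proof.
move=> Hinj.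
rewrite -row_free_unit -kermx_eq0; apply/eqP; apply/row_matrixP => i; rewrite row0.
set L := (lin_mulmx B - lin_mulmxr M).
have := mulmx_ker L => /(congr1 (row i)); rewrite row_mul row0.
rewrite -[row i _]vec_mxK /L mulmxBr /lin_mulmx /lin_mulmxr !mul_vec_lin /= -linearB /=.
move=> H.
have : B *m vec_mx (row i (kermx L)) - vec_mx (row i (kermx L)) *m M = 0.
  by apply: (can_inj mxvecK); rewrite H linear0.
move/eqP; rewrite subr_eq0 => /eqP /Hinj ->.
by rewrite linear0.
Qed.

Lemma sylv_sol (F : fieldType) r n (B : 'M[F]_r) (M : 'M[F]_n) (C : 'M[F]_(r, n)) :
  (lin_mulmx B - lin_mulmxr M : 'M_(r * n)) \in unitmx ->
  let X := vec_mx (mxvec C *m invmx (lin_mulmx B - lin_mulmxr M)) in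
  B *m X - X *m M = C.
Proof.
move=> Hu X.
have E : mxvec X *m (lin_mulmx B - lin_mulmxr M) = mxvec C.
  by rewrite /X vec_mxK mulmxKV.
apply: (can_inj mxvecK).
rewrite -E mulmxBr /lin_mulmx /lin_mulmxr !mul_vec_lin /= linearB.
by [].
Qed.

From Stdlib Require Import FunctionalExtensionality.

Definition Amat (K : fieldType) n (A : 'I_n -> 'I_n -> nat -> K) k : 'M[K]_n :=
  \matrix_(i, j) A i j k.
Arguments Amat {K n} A k.

Definition Lop (K : fieldType) r n (B : 'M[K]_r) (M : 'M[K]_n) : 'M[K]_(r * n) :=
  lin_mulmx B - lin_mulmxr M.
Arguments Lop {K r n} B M.

Definition newv (K : fieldType) r n (q : K) (A : 'I_n -> 'I_n -> nat -> K)
  (B : 'M[K]_r) (f : nat -> 'M[K]_(r, n)) k : 'M[K]_(r, n) :=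
  vec_mx (mxvec (\sum_(j < k) q ^+ j *: (f j *m Amat A (k - j)))
          *m invmx (Lop B (q ^+ k *: Amat A 0))).

Arguments newv {K r n} q A B f k.

Fixpoint fs {K : fieldType} {r n} (q : K) (A : 'I_n -> 'I_n -> nat -> K)
  (B : 'M[K]_r) (Pb : 'M[K]_(r, n)) k : nat -> 'M[K]_(r, n) :=
  match k with
  | 0 => fun _ => Pb
  | k'.+1 => fun m => if m == k'.+1 then newv q A B (fs q A B Pb k') k'.+1
                      else fs q A B Pb k' m
  end.

Lemma fs_stable (K : fieldType) r n (q : K) A (B : 'M[K]_r) (Pb : 'M[K]_(r, n)) d k m :
  (m <= k)%N -> fs q A B Pb (k + d) m = fs q A B Pb k m.
Proof.
move=> mk; elim: d => [|d IH]; first by rewrite addn0.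
rewrite addnS /=.
have -> : (m == (k + d).+1) = false.
  by apply/negbTE; rewrite neq_ltn ltnS (leq_trans mk (leq_addr _ _)).
exact: IH.
Qed.

Lemma fs_eq (K : fieldType) r n (q : K) A (B : 'M[K]_r) (Pb : 'M[K]_(r, n)) :
  B *m Pb = Pb *m Amat A 0 ->
  (forall k, (0 < k)%N -> Lop B (q ^+ k *: Amat A 0) \in unitmx) ->
  forall k, B *m fs q A B Pb k k
    = \sum_(j < k.+1) q ^+ j *: (fs q A B Pb j j *m Amat A (k - j)).
Proof.
move=> HB Hu [|k].
  by rewrite big_ord1 /= expr0 scale1r subnn.
rewrite /= eqxx.
have S := @sylv_sol _ _ _ B (q ^+ k.+1 *: Amat A 0) (\sum_(j < k.+1) q ^+ j *: (fs q A B Pb k j *m Amat A (k.+1 - j))) (Hu k.+1 isT).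
move: S; rewrite -/(Lop _ _) -/(newv q A B (fs q A B Pb k) k.+1) => /eqP; rewrite subr_eq => /eqP ->.
rewrite [RHS]big_ord_recr /= eqxx subnn; congr (_ + _).
  apply: eq_bigr => j _.
  have jk : (j <= k)%N by rewrite -ltnS.
  by have := @fs_stable _ _ _ q A B Pb (k - j) j j (leqnn j); rewrite subnKC // => ->.
by rewrite -scalemxAr.
Qed.

Theorem lemma6 (R : realType) (q : R[i]) (n : nat)
  (A : 'I_n -> 'I_n -> nat -> R[i]) (P : 'M[R[i]]_n) :
  q != 0 ->
  (forall m : nat, (0 < m)%N -> q ^+ m != 1) ->
  invertible_over_F A ->
  stablemx P (reduce_mx A) ->
  (forall (alpha : R[i]) (u : 'rV[R[i]]_n),
      u != 0 -> (u <= P)%MS -> u *m reduce_mx A = alpha *: u ->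
      forall m : int, m != 0 -> ~~ eigenvalue (reduce_mx A) (q ^ m * alpha)) ->
  exists s : 'rV[R[i]]_n -> ('I_n -> nat -> R[i]),
    [/\ forall (a : R[i]) (u v : 'rV[R[i]]_n), (u <= P)%MS -> (v <= P)%MS ->
          s (a *: u + v) = (fun j k => a * s u j k + s v j k),
        forall u, (u <= P)%MS -> s (u *m reduce_mx A) = lat_xi q A (s u)
      & forall u, (u <= P)%MS -> forall j, s u j 0%N = u 0 j].
Proof.
move=> qn0 _ _ Hst Hev.
have A0E : reduce_mx A = Amat A 0 by [].
set A0 := reduce_mx A in Hst Hev A0E *.
set Pb := row_base P.
set Bm := Pb *m A0 *m pinvmx Pb.
have Pbinj := row_free_inj (row_base_free P).
have HB : Bm *m Pb = Pb *m A0.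
  by rewrite /Bm mulmxKpV // stablemx_row_base.
have Hunit : forall k, (0 < k)%N -> Lop Bm (q ^+ k *: Amat A 0) \in unitmx.
  move=> k k0; apply: sylv_unit; apply: sylv_inj => z.
  move=> /eigenvalueP [v Hv v0]; apply/negP => /eigenvalueP [w Hw w0].
  have u0 : w *m Pb != 0.
    apply: contra w0 => /eqP H; apply/eqP; apply: Pbinj; by rewrite H mul0mx.
  have uP : (w *m Pb <= P)%MS.
    have : (w *m Pb <= Pb)%MS := submxMl _ _.
    by rewrite /Pb eq_row_base.
  have uA : w *m Pb *m A0 = z *: (w *m Pb).
    by rewrite -mulmxA -HB mulmxA Hw scalemxAl.
  have Hk : (- (k%:Z)) != 0.
    by rewrite oppr_eq0 eqz_nat -lt0n.
  have := Hev z _ u0 uP uA _ Hk.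
  apply/negP; rewrite negbK; apply/eigenvalueP; exists v => //.
  rewrite -A0E -scalemxAr in Hv.
  have qk0 : q ^+ k != 0 by rewrite expf_neq0.
  by rewrite -invr_expz -scalerA -Hv scalerA mulVf ?scale1r.
pose X k := fs q A Bm Pb k k.
have HX := @fs_eq _ _ _ q A Bm Pb HB Hunit.
exists (fun u j k => (u *m pinvmx Pb *m X k) 0 j).
split.
- move=> a u v _ _; apply: functional_extensionality => j.
  apply: functional_extensionality => k.
  by rewrite !mulmxDl -!scalemxAl !mxE.
- move=> u uP.
  have uPb : (u <= Pb)%MS by rewrite /Pb eq_row_base.
  have wE : u *m A0 *m pinvmx Pb = u *m pinvmx Pb *m Bm.
    apply: Pbinj; rewrite mulmxKpV; last first.
      apply: submx_trans (submxMr A0 uPb) _.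
      by rewrite /Pb stablemx_row_base.
    by rewrite -mulmxA HB mulmxA mulmxKpV.
  apply: functional_extensionality => j.
  apply: functional_extensionality => k.
  rewrite wE -mulmxA /X HX /lat_xi /psmul /qtwist.
  rewrite mulmx_sumr summxE exchange_big /=.
  apply: eq_bigr => m _.
  rewrite -scalemxAr mxE mulmxA mxE mulr_sumr.
  apply: eq_bigr => i _.
  rewrite /Amat mxE mulrA. by congr (_ * _); rewrite mxE.
- move=> u uP j.
  have uPb : (u <= Pb)%MS by rewrite /Pb eq_row_base.
  by rewrite /X /= mulmxKpV.
Qed.
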